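(* Let $n\ge k\ge 2$ be positive integers and let $x_1,x_2,\ldots,x_k$ be positive integers with $\sum_{i=1}^k x_i=n$. Then $$n-1\le \sum_{i=1}^{k-1}x_ix_{i+1}\le \begin{cases}\lfloor n/2\rfloor\cdot\lceil n/2\rceil & \text{if } k=2,3,\\ ab+k-5 & \text{if } k\ge 4,\end{cases}$$ where $a=\lfloor (n-k+4)/2\rfloor$ and $b=\lceil (n-k+4)/2\rceil$. Moreover, for any such $n$ and $k$, both the lower bound and the upper bound are attained by some choice of positive integers $x_1,\ldots,x_k$ summing to $n$. *)

(* Defs.v *)
From mathcomp Require Import all_boot.
Set Implicit Arguments. Unset Strict Implicit. Unset Printing Implicit Defensive.

(* A composition of n into k positive parts, represented as a sequence x_1..x_k
   (stored 0-indexed as nth 0 s 0, ..., nth 0 s (k-1)). *)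
Definition composition (n k : nat) (s : seq nat) : Prop :=
  size s = k /\ all (fun x => 0 < x) s /\ sumn s = n.

Definition adj_sum (s : seq nat) : nat :=
  \sum_(i < (size s).-1) nth 0 s i * nth 0 s i.+1.

Definition upper_bound (n k : nat) : nat :=
  if k <= 3 then n./2 * uphalf n
  else ((n + 4 - k)./2 * uphalf (n + 4 - k) + k) - 5.

(* Main.v *)
Require Import Defs.
From mathcomp Require Import all_boot.
From mathcomp Require Import zify.
Set Implicit Arguments. Unset Strict Implicit. Unset Printing Implicit Defensive.

Fixpoint adjr (s : seq nat) : nat :=
  match s with
  | x :: ((y :: _) as r) => x * y + adjr r
  | _ => 0
  end.

Lemma adj_sumE s : adj_sum s = adjr s.
Proof.
elim: s => [|x [|y r] IH]; first by rewrite /adj_sum big_ord0.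
  by rewrite /adj_sum big_ord0.
rewrite /adj_sum /= big_ord_recl /=; congr (_ + _).
by transitivity (adj_sum (y :: r)); [|exact IH].
Qed.

Fixpoint altp (s : seq nat) : nat * nat :=
  match s with
  | [::] => (0, 0)
  | x :: r => (x + (altp r).2, (altp r).1)
  end.

Lemma altp_sum s : (altp s).1 + (altp s).2 = sumn s.
Proof. elim: s => [|x r IH] //=; lia. Qed.

Lemma adj_alt s x : adjr (x :: s) <= (altp (x :: s)).1 * (altp (x :: s)).2.
Proof.
elim: s x => [|y r IH] x /=; first by [].
have := IH y => /=. set P := (altp r).2; set Q := (altp r).1. nia.
Qed.

Lemma fc_aux x d : x * (x + d) <= ((x + (x + d)) %/ 2) * ((x + (x + d)).+1 %/ 2).
Proof.
have [e [r [He Hr]]] : exists e r, d = 2 * e + r /\ r < 2.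
  by exists (d %/ 2), (d %% 2); split; [rewrite {1}(divn_eq d 2); lia | exact: ltn_pmod].
have H1 : (x + (x + d)) %/ 2 = x + e by subst d; lia.
have H2 : (x + (x + d)).+1 %/ 2 = x + e + r by subst d; lia.
rewrite H1 H2 He. case: r Hr {H2 He} => [|[|r]] // _; nia.
Qed.

Lemma fc x y : x * y <= (x + y)./2 * uphalf (x + y).
Proof.
rewrite uphalfE -!divn2.
case: (leqP x y) => le.
  have -> : y = x + (y - x) by lia.
  exact: fc_aux.
rewrite mulnC [x + y]addnC.
have -> : x = y + (x - y) by lia.
exact: fc_aux.
Qed.

Lemma adj_fc s : adjr s <= (sumn s)./2 * uphalf (sumn s).
Proof.
case: s => [|x r] //.
apply: leq_trans (adj_alt r x) _.
rewrite -altp_sum; exact: fc.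
Qed.

Lemma adj_shift x r : all (fun x => 0 < x) (x :: r) ->
  adjr (x :: r) + (x - 1) <=
  adjr (map predn (x :: r)) + 2 * sumn (map predn (x :: r)) + size r.
Proof.
elim: r x => [|y r IH] x /=; first lia.
move=> /andP [hx /andP [hy hr]].
have := IH y; rewrite /= hy hr => /(_ isT).
case: x hx => [//|x] _; case: y hy => [//|y] _ /=.
set A := adjr _; set B := adjr _; set S := sumn _.
rewrite !subn1 /=. nia.
Qed.

Lemma sumn_pred s : all (fun x => 0 < x) s -> sumn (map predn s) + size s = sumn s.
Proof. elim: s => [|x r IH] //= /andP [hx hr]; have := IH hr; lia. Qed.

Lemma adj_low x r : all (fun x => 0 < x) (x :: r) -> sumn r <= adjr (x :: r).
Proof.
elim: r x => [|y r IH] x //= /andP [hx /andP [hy hr]].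
have := IH y; rewrite /= hy hr => /(_ isT). nia.
Qed.

Lemma adj_ones x j : adjr (x :: nseq j.+1 1) = x + j.
Proof.
elim: j x => [|j IH] x /=; first by rewrite muln1 addn0.
have := IH 1 => /=; lia.
Qed.

Lemma hu m : m./2 + uphalf m = m.
Proof. rewrite uphalfE -!divn2; lia. Qed.

Lemma hu4 m : (m + 4)./2 = m./2 + 2 /\ uphalf (m + 4) = uphalf m + 2.
Proof. rewrite !uphalfE -!divn2; lia. Qed.

Lemma h2 m : 2 <= m -> 0 < m./2.
Proof. rewrite -divn2; lia. Qed.

Lemma all_pos_nseq j : all (fun x => 0 < x) (nseq j 1).
Proof. by elim: j. Qed.

Theorem lemma3 (n k : nat) (hk : 2 <= k) (hkn : k <= n) :
  (forall s : seq nat, composition n k s ->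
     n - 1 <= adj_sum s /\ adj_sum s <= upper_bound n k) /\
  (exists s : seq nat, composition n k s /\ adj_sum s = n - 1) /\
  (exists s : seq nat, composition n k s /\ adj_sum s = upper_bound n k).
Proof.
split; [|split].
- move=> s [Hsz [Hpos Hsum]]; rewrite adj_sumE.
  case: s Hsz Hpos Hsum => [|x [|y r]] //=; try lia.
  move=> Hsz Hpos Hsum; split.
    have := @adj_low y r; rewrite /=.
    move: (Hpos) => /= /andP [hx /andP [hy hr]]; rewrite hy hr => /(_ isT) /=. nia.
  rewrite /upper_bound; case: ifP => Hk3.
    have := adj_fc [:: x, y & r]; rewrite /= Hsum; done.
  have := @adj_shift x (y :: r) Hpos; have := adj_fc (map predn [:: x, y & r]).
  have := @sumn_pred [:: x, y & r] Hpos.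
  set Y := sumn (map predn _); set Q := adjr (map predn _).
  rewrite /= Hsz Hsum => HY.
  have -> : n + 4 - k = Y + 4 by lia.
  have [-> ->] := hu4 Y. have := hu Y.
  set a := Y./2; set b := uphalf Y. nia.
- exists ((n - k + 1) :: nseq (k - 1) 1); split.
    split; first by rewrite /= size_nseq; lia.
    split; first by rewrite /= all_pos_nseq addn1.
    rewrite /= sumn_nseq; lia.
  rewrite adj_sumE.
  have -> : k - 1 = (k - 2).+1 by lia.
  rewrite adj_ones; lia.
- rewrite /upper_bound; case: ifP => Hk3.
    have := hu n; have := h2 (leq_trans hk hkn).
    set a := n./2; set b := uphalf n => ha hab.
    case: k hk hkn Hk3 => [|[|[|[|k]]]] // _ hkn _.
      exists [:: a; b]; split; last by rewrite adj_sumE /= addn0.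
      split; first by []. split; last by rewrite /= addn0.
      rewrite /= ha /=; lia.
    exists [:: 1; a; b - 1]; split; last first.
      rewrite adj_sumE /=; nia.
    split; first by []. split; last by rewrite /=; lia.
    rewrite /= ha /=; lia.
  set Y := n - k.
  have -> : n + 4 - k = Y + 4 by lia.
  have [-> ->] := hu4 Y. have := hu Y.
  set a := Y./2; set b := uphalf Y => hab.
  exists [:: 1, a + 1, b + 1 & nseq (k - 3) 1]; split.
    split; first by rewrite /= size_nseq; lia.
    split; first by rewrite /= all_pos_nseq !addn1.
    rewrite /= sumn_nseq; lia.
  rewrite adj_sumE.
  have -> : k - 3 = (k - 4).+1 by lia.
  have := adj_ones (b + 1) (k - 4); rewrite /= => ->; nia.
Qed.
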